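(* There is an absolute constant $c>0$ such that the following holds. For any $N,T\ge1$, suppose the interference graph on the $N$ individuals has no edges. Then for any (possibly adaptive) design and any estimator $\widehat\Delta$ (a function of the observed treatments $W$ and outcomes $Y$), there exists an instance of the model (satisfying the model assumptions, with the edgeless interference graph) under which $\mathbb E[(\widehat\Delta-\Delta)^2]\ge c/(NT)$; that is, ${\rm MSE}(\widehat\Delta)=\Omega(1/(NT))$.
   Context: Model. There are $N$ individuals $U$ ($|U|=N$) and $T$ rounds $[T]=\{1,\dots,T\}$; with an edgeless interference graph each individual's neighborhood is $\mathcal N(i)=\{i\}$. Treatments $W\in\{0,1\}^{N\times T}$ are assigned by a design (here possibly adaptive, i.e., treatments may depend on previously observed data). Each individual has a state $S_{it}$ in a state space $\mathcal S$ evolving as a Markov chain with kernel $P^{W_{it}}_{it}$ depending on its own treatment; outcomes are $Y_{it}=\mu_{it}(S_{it},W_{it})+\epsilon_{it}$ with $\mu_{it}\in[0,1]$ and mean-zero noise with $\mathbb E[\epsilon_{it}\epsilon_{i't'}\mid S,W]$ bounded by $\sigma^2\mathbbm 1(i=i',t=t')$; the kernels satisfy a rapid-mixing contraction $d_{\rm TV}(fP,f'P)\le e^{-1/t_{\rm mix}}d_{\rm TV}(f,f')$. Only $W$ and $Y$ are observed. The estimand is the global average treatment effect $\Delta=\frac1{NT}\sum_{(i,t)}\big(\mathbb E[Y_{it}\mid W=\mathbf 1]-\mathbb E[Y_{it}\mid W=\mathbf 0]\big)$. *)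

(* Defs.v *)
From HB Require Import structures.
From Stdlib Require Import Reals.
From mathcomp Require Import all_boot all_order all_algebra.
From mathcomp Require Import Rstruct.

Import Order.TTheory GRing.Theory Num.Theory.
Local Open Scope ring_scope.

Notation R := Rdefinitions.R.

(* Rounds are 0-indexed here (round t+1 of the paper is t : 'I_T).          *)
Definition cell (N T : nat) := ('I_N * 'I_T)%type.

Definition tmat (N T : nat) := {ffun cell N T -> bool}.
Definition omat (N T : nat) := cell N T -> R.

Definition row_at {N T : nat} (W : tmat N T) (t : 'I_T) : {ffun 'I_N -> bool} :=
  [ffun i => W (i, t)].

(* the round preceding t (irrelevant when t = 0) *)
Definition prev_round {T : nat} (t : 'I_T) : 'I_T := insubd t (val t).-1.

Definition is_distr {A : finType} (p : A -> R) : Prop :=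
  (forall a, 0 <= p a) /\ \sum_(a : A) p a = 1.

(* Designs (possibly adaptive and randomized).  At round t, the treatment    *)
(* vector (W_{1t},...,W_{Nt}) is drawn from dprob t W Y, a distribution on   *)
(* {0,1}^N which may depend on the treatments and outcomes observed in the   *)
(* previous rounds (and only on those: non-anticipation).                    *)
Record design (N T : nat) := Design {
  dprob : 'I_T -> tmat N T -> omat N T -> {ffun 'I_N -> bool} -> R }.
Arguments dprob {N T}.

Definition valid_design {N T : nat} (d : design N T) : Prop :=
  (forall t W Y, is_distr (dprob d t W Y)) /\
  (forall (t : 'I_T) (W W' : tmat N T) (Y Y' : omat N T),
     (forall (i : 'I_N) (s : 'I_T), (val s < val t)%N ->
        W (i, s) = W' (i, s) /\ Y (i, s) = Y' (i, s)) ->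
     dprob d t W Y = dprob d t W' Y').

Definition const_design {N T : nat} (w : bool) : design N T :=
  @Design N T (fun _ _ _ v => if v == [ffun => w] then 1 else 0).

Definition estimator (N T : nat) := tmat N T -> omat N T -> R.

(* Instances of the model with the edgeless interference graph             *)
(* (neighbourhood of i is {i}): individual i's state evolves by its own      *)
(* kernel driven by its own treatment only.                                  *)
(*   S_{i,0} ~ init i,  S_{i,t+1} ~ kern i t W_{it} S_{it} (.),             *)
(*   Y_{it} = mu i t S_{it} W_{it} + eps_{it},                              *)
(* with eps_{it} drawn (given S, W, independently over cells) from a finitely *)
(* supported law nlaw i t S_{it} W_{it} on noise labels, with value nval.    *)
Record instance (N T : nat) := Instance {
  St : finType;
  init : 'I_N -> St -> R;
  kern : 'I_N -> 'I_T -> bool -> St -> St -> R;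
  mu : 'I_N -> 'I_T -> St -> bool -> R;
  Ns : finType;
  nlaw : 'I_N -> 'I_T -> St -> bool -> Ns -> R;
  nval : 'I_N -> 'I_T -> St -> bool -> Ns -> R }.
Arguments St {N T}. Arguments init {N T}. Arguments kern {N T}. Arguments mu {N T}.
Arguments Ns {N T}. Arguments nlaw {N T}. Arguments nval {N T}.

Definition push {S : finType} (P : S -> S -> R) (f : S -> R) : S -> R :=
  fun s' => \sum_(s : S) f s * P s s'.

Definition dTV {S : finType} (f g : S -> R) : R :=
  2^-1 * \sum_(s : S) `|f s - g s|.

Definition model_ok (sigma tmix : R) {N T : nat} (I : instance N T) : Prop :=
  (forall i, is_distr (init I i)) /\
  (forall i t w s, is_distr (kern I i t w s)) /\
  (forall i t s w, 0 <= mu I i t s w <= 1) /\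
  (forall i t s w, is_distr (nlaw I i t s w)) /\
  (forall i t s w, \sum_(e : Ns I) nlaw I i t s w e * nval I i t s w e = 0) /\
  (forall i t s w,
      \sum_(e : Ns I) nlaw I i t s w e * (nval I i t s w e) ^+ 2 <= sigma ^+ 2) /\
  (forall i t w (f g : St I -> R), is_distr f -> is_distr g ->
      dTV (push (kern I i t w) f) (push (kern I i t w) g)
        <= exp (- 1 / tmix) * dTV f g).

Definition outcome {N T : nat} (I : instance N T) (W : tmat N T)
  (S : {ffun cell N T -> St I}) (E : {ffun cell N T -> Ns I}) : omat N T :=
  fun c => mu I c.1 c.2 (S c) (W c) + nval I c.1 c.2 (S c) (W c) (E c).

Definition traj_prob {N T : nat} (I : instance N T) (d : design N T) (W : tmat N T)
  (S : {ffun cell N T -> St I}) (E : {ffun cell N T -> Ns I}) : R :=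
  let Y := outcome I W S E in
  \prod_(t : 'I_T)
    (dprob d t W Y (row_at W t) *
     \prod_(i : 'I_N)
       ((if val t is 0 then init I i (S (i, t))
         else kern I i (prev_round t) (W (i, prev_round t))
                (S (i, prev_round t)) (S (i, t))) *
        nlaw I i t (S (i, t)) (W (i, t)) (E (i, t)))).

Definition expect {N T : nat} (I : instance N T) (d : design N T)
  (F : tmat N T -> omat N T -> R) : R :=
  \sum_(W : tmat N T) \sum_(S : {ffun cell N T -> St I})
    \sum_(E : {ffun cell N T -> Ns I})
      traj_prob I d W S E * F W (outcome I W S E).

Definition gate {N T : nat} (I : instance N T) : R :=
  (N%:R * T%:R)^-1 * \sum_(c : cell N T)
    (expect I (@const_design N T true) (fun _ Y => Y c)
     - expect I (@const_design N T false) (fun _ Y => Y c)).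

Definition MSE {N T : nat} (I : instance N T) (d : design N T) (est : estimator N T) : R :=
  expect I d (fun W Y => (est W Y - gate I) ^+ 2).

(* Main.v *)
Require Import Defs.
From HB Require Import structures.
From Stdlib Require Import Reals Classical FunctionalExtensionality.
From mathcomp Require Import all_boot all_order all_algebra.
From mathcomp Require Import Rstruct.
From mathcomp Require Import ring lra.
Import Order.TTheory GRing.Theory Num.Theory.
Local Open Scope ring_scope.

Section Exp.
Variable I : finType.
Variable r : I -> bool -> R.
Hypothesis r1 : forall i, r i true + r i false = 1.

Definition wt (x : {ffun I -> bool}) := \prod_c r c (x c).

Lemma sumb (F : bool -> R) : \sum_(b : bool) F b = F true + F false.
Proof. by rewrite big_bool /= addrC. Qed.

Lemma Eprod (G : I -> bool -> R) :
  \sum_(x : {ffun I -> bool}) wt x * \prod_c G c (x c) =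
  \prod_c (\sum_b r c b * G c b).
Proof.
rewrite bigA_distr_bigA /=; apply: eq_bigr => x _.
by rewrite /wt -big_split.
Qed.

Lemma E1 : \sum_(x : {ffun I -> bool}) wt x = 1.
Proof.
transitivity (\sum_(x : {ffun I -> bool}) wt x * \prod_(c : I) (fun _ _ => 1) c (x c)).
  by apply: eq_bigr => x _; rewrite big1 ?mulr1.
by rewrite (Eprod (fun _ _ => 1)) big1 // => c _; rewrite sumb !mulr1 r1.
Qed.

Lemma E2 (c : I) (f : bool -> R) :
  \sum_(x : {ffun I -> bool}) wt x * f (x c) = \sum_b r c b * f b.
Proof.
pose G := fun i b => if i == c then f b else 1.
transitivity (\sum_(x : {ffun I -> bool}) wt x * \prod_(i : I) G i (x i)).
  apply: eq_bigr => x _; congr (_ * _).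
  rewrite (bigD1 c) //= /G eqxx big1 ?mulr1 //.
  by move=> i /negPf ->.
rewrite (Eprod G) (bigD1 c) //= /G eqxx [X in _ * X = _]big1 ?mulr1 //.
by move=> i /negPf ->; rewrite sumb !mulr1 r1.
Qed.

Lemma E3 (c c' : I) (f g : bool -> R) : c != c' ->
  \sum_(x : {ffun I -> bool}) wt x * (f (x c) * g (x c')) =
  (\sum_b r c b * f b) * (\sum_b r c' b * g b).
Proof.
move=> ncc; have nc'c : c' != c by rewrite eq_sym.
pose G := fun i b => if i == c then f b else if i == c' then g b else 1.
transitivity (\sum_(x : {ffun I -> bool}) wt x * \prod_(i : I) G i (x i)).
  apply: eq_bigr => x _; congr (_ * _).
  rewrite (bigD1 c) //= /G eqxx (bigD1 c') //= (negPf nc'c) eqxx big1 ?mulr1 //.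
  by move=> i /andP [/negPf -> /negPf ->].
rewrite (Eprod G) (bigD1 c) //= /G eqxx (bigD1 c') //= (negPf nc'c) eqxx.
rewrite [X in _ * (_ * X) = _]big1 ?mulr1 //.
by move=> i /andP [/negPf -> /negPf ->]; rewrite sumb !mulr1 r1.
Qed.

Lemma var_lb (phi : I -> bool -> R) (a : R) :
  \sum_c (r c true * r c false * (phi c true - phi c false) ^+ 2) <=
  \sum_(x : {ffun I -> bool}) wt x * (a - \sum_c phi c (x c)) ^+ 2.
Proof.
pose m c := r c true * phi c true + r c false * phi c false.
pose psi c b := phi c b - m c.
pose a' := a - \sum_c m c.
have Epsi c : \sum_b r c b * psi c b = 0.
  rewrite sumb /psi /m; have := r1 c; move=> h.
  have -> : r c false = 1 - r c true by rewrite -h; ring.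
  ring.
have Epsi2 c : \sum_b r c b * psi c b ^+ 2 = r c true * r c false * (phi c true - phi c false) ^+ 2.
  rewrite sumb /psi /m; have := r1 c; move=> h.
  have -> : r c false = 1 - r c true by rewrite -h; ring.
  ring.
have eqx x : a - \sum_c phi c (x c) = a' - \sum_c psi c (x c).
  rewrite /a' /psi sumrB; ring.
under [X in _ <= X]eq_bigr do rewrite eqx.
have -> : \sum_(x : {ffun I -> bool}) wt x * (a' - \sum_c psi c (x c)) ^+ 2 =
   a' ^+ 2 * \sum_x wt x - 2 * a' * \sum_c (\sum_x wt x * psi c (x c))
   + \sum_c \sum_c' (\sum_x wt x * (psi c (x c) * psi c' (x c'))).
  have expand x : wt x * (a' - \sum_c psi c (x c)) ^+ 2 =
     a' ^+ 2 * wt x - 2 * a' * \sum_c (wt x * psi c (x c))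
     + \sum_c \sum_c' wt x * (psi c (x c) * psi c' (x c')).
    have -> : \sum_c \sum_c' wt x * (psi c (x c) * psi c' (x c')) =
              wt x * (\sum_c psi c (x c)) ^+ 2.
      rewrite expr2 mulr_suml mulr_sumr; apply: eq_bigr => c _.
      by rewrite mulr_sumr mulr_sumr; apply: eq_bigr => c' _; rewrite mulrA.
    rewrite -mulr_sumr; ring.
  under eq_bigr do rewrite expand.
  rewrite big_split sumrB /= -mulr_sumr -mulr_sumr.
  congr (_ - _ * _ + _); first exact: exchange_big.
  rewrite exchange_big /=; apply: eq_bigr => c _; exact: exchange_big.
rewrite E1 mulr1.
under [X in _ <= _ - _ * X + _]eq_bigr => c _ do rewrite (E2 c (psi c)) Epsi.
rewrite [X in _ <= _ - _ * X + _]big1 // mulr0 subr0.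
have -> : \sum_c \sum_c' \sum_x wt x * (psi c (x c) * psi c' (x c')) =
          \sum_c (r c true * r c false * (phi c true - phi c false) ^+ 2).
  apply: eq_bigr => c _.
  rewrite (bigD1 c) //= [X in _ + X]big1 ?addr0.
    by rewrite -Epsi2 -(E2 c (fun b => psi c b ^+ 2)); apply: eq_bigr => x _; rewrite expr2.
  by move=> c' ncc; rewrite (E3 c c' (psi c) (psi c')) 1?eq_sym // Epsi mul0r.
rewrite lerDr; exact: sqr_ge0.
Qed.
End Exp.


Section DesignSum.
Variables (N T : nat) (d : design N T) (Y : tmat N T -> omat N T).
Hypothesis vd : valid_design d.
Hypothesis Yloc : forall (W W' : tmat N T) (c : cell N T), W c = W' c -> Y W c = Y W' c.

Let f (t : 'I_T) (W : tmat N T) := dprob d t W (Y W) (row_at W t).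

Definition Pk (k : nat) (W : tmat N T) := [forall c : cell N T, (k <= val c.2)%N ==> ~~ W c].

Lemma dprob_loc (t : 'I_T) (W W' : tmat N T) :
  (forall i (s : 'I_T), (val s < val t)%N -> W (i, s) = W' (i, s)) ->
  dprob d t W (Y W) = dprob d t W' (Y W').
Proof.
move=> h; apply: vd.2 => i s lt; split; first exact: h.
by apply: Yloc; apply: h.
Qed.

Lemma claim k : (k <= T)%N ->
  \sum_(W | Pk k W) \prod_(t : 'I_T | (val t < k)%N) f t W = 1.
Proof.
elim: k => [_|k IH kT].
  rewrite (big_pred1 [ffun => false]); first by rewrite big1.
  move=> W /=; apply/forallP/eqP => [h|-> c]; last by rewrite ffunE.
  by apply/ffunP => c; rewrite ffunE; apply/negbTE; exact: (implyP (h c)).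
pose kk := Ordinal kT.
have -> : \sum_(W | Pk k.+1 W) \prod_(t : 'I_T | (val t < k.+1)%N) f t W =
          \sum_(W | Pk k.+1 W) (f kk W * \prod_(t : 'I_T | (val t < k)%N) f t W).
  apply: eq_bigr => W _; rewrite (bigD1 kk) //=; congr (_ * _).
  apply: eq_bigl => t; rewrite ltnS leq_eqVlt -val_eqE /=.
  by case: (ltngtP (val t) k).
rewrite (partition_big (fun W => row_at W kk) predT) //=.
pose tau (v : {ffun 'I_N -> bool}) (W : tmat N T) : tmat N T :=
  [ffun c => if c.2 == kk then W c (+) v c.1 else W c].
have tauK v : involutive (tau v).
  move=> W; apply/ffunP => c; rewrite !ffunE.
  by case: (c.2 == kk) => //; rewrite addbK.
have tau_off v W c : c.2 != kk -> tau v W c = W c.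
  by move=> h; rewrite ffunE (negPf h).
have H : forall v, \sum_(W | Pk k.+1 W && (row_at W kk == v))
           (f kk W * \prod_(t : 'I_T | (val t < k)%N) f t W) =
           \sum_(W | Pk k W)
           (dprob d kk W (Y W) v * \prod_(t : 'I_T | (val t < k)%N) f t W).
  move=> v; rewrite (reindex_inj (inv_inj (tauK v))) /=.
  apply: eq_big => W.
    have -> : Pk k.+1 (tau v W) = Pk k.+1 W.
      apply: eq_forallb => c; case: (leqP k.+1 (val c.2)) => //= h.
      by rewrite tau_off // -val_eqE /= neq_ltn h orbT.
    have -> : (row_at (tau v W) kk == v) = [forall i, ~~ W (i, kk)].
      apply/eqP/forallP => [h i|h].
        move/ffunP: h => /(_ i); rewrite /= !ffunE /= eqxx.
        by case: (W (i, kk)); case: (v i).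
      by apply/ffunP => i; rewrite !ffunE /= eqxx; move: (h i); case: (W (i, kk)).
    apply/andP/forallP => [[/forallP h1 /forallP h2] c|h].
      apply/implyP => kc; case: (ltngtP k (val c.2)) kc => // [lt|eq] _.
        exact: (implyP (h1 c) lt).
      case: c eq => i t /= eq.
      have -> : t = kk by apply: val_inj; rewrite /= eq.
      exact: h2.
    split; apply/forallP; [move=> c|move=> i].
      by apply/implyP => kc; exact: (implyP (h c) (ltnW kc)).
    exact: (implyP (h (i, kk))).
  move=> /andP [_ /eqP hv]; congr (_ * _).
    rewrite /f hv; apply: (congr1 (fun g => g v)).
    apply: dprob_loc => i s st; apply: tau_off => /=.
    by rewrite -val_eqE /= neq_ltn st.
  apply: eq_bigr => t tk; rewrite /f.
  have -> : row_at (tau v W) t = row_at W t.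
    by apply/ffunP => i; rewrite !ffunE /= ifF //; apply/negbTE; rewrite -val_eqE /= neq_ltn tk.
  rewrite (dprob_loc t (tau v W) W) // => i s st; apply: tau_off => /=.
  by rewrite -val_eqE /= neq_ltn (ltn_trans st tk).
rewrite (eq_bigr _ (fun v _ => H v)).
rewrite exchange_big /=.
rewrite -[RHS](IH (ltnW kT)).
apply: eq_bigr => W _.
by rewrite -mulr_suml (proj2 (proj1 vd kk W (Y W))) mul1r.
Qed.

Lemma design_sum : \sum_(W : tmat N T) \prod_(t : 'I_T) f t W = 1.
Proof.
rewrite -[RHS](@claim T (leqnn T)); apply: eq_big => [W|W _].
  by symmetry; apply/forallP => c; rewrite leqNgt ltn_ord.
by apply: eq_bigl => t; rewrite ltn_ord.
Qed.
End DesignSum.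


Definition q (b s : bool) : R := if s == b then 3 / 4 else 1 / 4.

Lemma q_sum_s b : q b true + q b false = 1.
Proof. rewrite /q; case: b => /=; lra. Qed.
Lemma q_sum_b s : q true s + q false s = 1.
Proof. rewrite /q; case: s => /=; lra. Qed.
Lemma q_ge0 b s : 0 <= q b s.
Proof. rewrite /q; case: ifP => _; lra. Qed.

Section Inst.
Variables (N T : nat) (th : {ffun cell N T -> bool}).

Definition thn (i : 'I_N) (k : nat) : bool :=
  if @insub nat (fun k => (k < T)%N) 'I_T k is Some t then th (i, t) else false.

Lemma thnE i (t : 'I_T) : thn i (val t) = th (i, t).
Proof. by rewrite /thn valK. Qed.

Definition inst : instance N T :=
  @Instance N T bool
    (fun i s => q (thn i 0) s)
    (fun i t w s s' => q (thn i (val t).+1) s')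
    (fun i t s w => if s == w then 1 else 0)
    unit
    (fun _ _ _ _ _ => 1)
    (fun _ _ _ _ _ => 0).


Lemma inst_ok sigma tmix : 0 <= sigma -> 0 < tmix -> model_ok sigma tmix inst.
Proof.
move=> hs ht.
have dq b : is_distr (q b) by split; [exact: q_ge0| rewrite sumb q_sum_s].
split; first by move=> i; exact: dq.
split; first by move=> i t w s; exact: dq.
split; first by move=> i t s w /=; case: ifP => _; lra.
split; first by move=> i t s w; split => //=; rewrite big_const card_unit /=; lra.
split; first by move=> i t s w /=; rewrite big1 // => e _; rewrite mulr0.
split; first by move=> i t s w /=; rewrite big1 // ?sqr_ge0 // => e _; rewrite expr0n mulr0.
move=> i t w f g [f0 f1] [g0 g1].
have pushE h : \sum_s h s = 1 -> push (kern inst i t w) h = q (thn i (val t).+1).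
  move=> h1; apply: functional_extensionality => s' /=; rewrite /push /=.
  by rewrite -mulr_suml h1 mul1r.
rewrite (pushE f f1) (pushE g g1) /dTV [X in _ * X <= _]big1; last by move=> s _; rewrite subrr normr0.
rewrite mulr0.
apply: mulr_ge0; first by apply/RleP; apply: Rlt_le; apply: exp_pos.
apply: mulr_ge0; first lra.
by apply: sumr_ge0 => s _.
Qed.

Definition Yo (W : tmat N T) (S : {ffun cell N T -> bool}) : omat N T :=
  fun c => (if S c == W c then 1 else 0) + 0.

Definition Dd (d : design N T) W S := \prod_(t : 'I_T) dprob d t W (Yo W S) (row_at W t).
Definition pi (S : {ffun cell N T -> bool}) := \prod_(c : cell N T) q (th c) (S c).

Lemma factorE i (t : 'I_T) s :
  (if val t is 0 then q (thn i 0) s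
   else q (thn i (val (prev_round t)).+1) s) = q (th (i, t)) s.
Proof.
case: t => [[|k] ht] /=.
  by have := thnE i (Ordinal ht); move=> /= ->.
have -> : val (prev_round (Ordinal ht)) = k.
  by rewrite /prev_round val_insubd /= (ltnW ht).
by have := thnE i (Ordinal ht); move=> /= ->.
Qed.

Lemma trajE d W (S : {ffun cell N T -> bool}) E :
  traj_prob inst d W S E = Dd d W S * pi S.
Proof.
rewrite /traj_prob big_split /=; congr (_ * _).
under eq_bigr => t _ do under eq_bigr => i _ do rewrite factorE mulr1.
rewrite exchange_big pair_big /=; apply: eq_bigr => [[i t]] _ //.
Qed.

Lemma expectE d F : expect inst d F =
  \sum_(W : tmat N T) \sum_(S : {ffun cell N T -> bool}) Dd d W S * pi S * F W (Yo W S).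
Proof.
rewrite /expect; apply: eq_bigr => W _; apply: eq_bigr => S _.
rewrite (big_pred1 [ffun => tt]) ?trajE //.
move=> E /=; symmetry; apply/eqP/ffunP => c; rewrite ffunE; by case: (E c).
Qed.

Lemma Dconst w W S : Dd (const_design w) W S = if W == [ffun => w] then 1 else 0.
Proof.
rewrite /Dd /=; case: eqP => [->|neq].
  by rewrite big1 // => t _; rewrite ifT //; apply/eqP/ffunP => i; rewrite !ffunE.
have [[i t] Hc] : exists c, W c != w.
  apply: NNPP => H; apply: neq; apply/ffunP => c; rewrite ffunE.
  case: (boolP (W c == w)) => [/eqP //|h]; exfalso; apply: H; by exists c.
rewrite (bigD1 t) //= ifF ?mul0r //.
apply/negbTE; apply: contra Hc => /eqP /ffunP /(_ i); rewrite !ffunE => ->.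
by [].
Qed.

Lemma expect_const w c :
  expect inst (const_design w) (fun _ Y => Y c) = q (th c) w.
Proof.
rewrite expectE (bigD1 [ffun => w]) //= [X in _ + X]big1 ?addr0; last first.
  move=> W /negPf hW; apply: big1 => S _; by rewrite Dconst hW !mul0r.
under eq_bigr => S _ do rewrite Dconst eqxx mul1r /Yo addr0.
rewrite (E2 _ (fun c b => q (th c) b) (fun c => q_sum_s (th c)) c (fun b => if b == [ffun => w] c then 1 else 0)).
by rewrite sumb ffunE; case: w => /=; rewrite ?mulr1 ?mulr0 ?addr0 ?add0r.
Qed.

Lemma gateE : gate inst =
  (N%:R * T%:R)^-1 * \sum_(c : cell N T) (q (th c) true - q (th c) false).
Proof.
rewrite /gate; congr (_ * _); apply: eq_bigr => c _.
by rewrite !expect_const.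
Qed.
End Inst.
Arguments inst {N T}. Arguments pi {N T}. Arguments Dd {N T}. Arguments Yo {N T}.
Arguments expectE {N T}. Arguments gateE {N T}. Arguments inst_ok {N T}.


Theorem mainTheorem7 :
  exists c : R, 0 < c /\
  forall (N T : nat), (1 <= N)%N -> (1 <= T)%N ->
  forall (sigma tmix : R), 0 <= sigma -> 0 < tmix ->
  forall (d : design N T) (est : estimator N T), valid_design d ->
  exists I : instance N T,
    model_ok sigma tmix I /\ c / (N%:R * T%:R) <= MSE I d est.
Proof.
exists (3/16); split; first lra.
move=> N T hN hT sigma tmix hs ht d est vd.
set n : R := N%:R * T%:R.
have n0 : 0 < n by rewrite mulr_gt0 // ltr0n.
set V := 3/16 / n.
suff [th hth] : exists th : {ffun cell N T -> bool}, V <= MSE (inst th) d est.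
  by exists (inst th); split => //; exact: inst_ok.
apply: NNPP => nex.
have lt : forall th, MSE (inst th) d est < V.
  move=> th; rewrite ltNge; apply/negP => h; apply: nex; by exists th.
have hasT : has (fun _ => true) (index_enum {ffun cell N T -> bool}).
  by apply/hasP; exists [ffun => false]; rewrite ?mem_index_enum.
have := ltr_sum hasT (fun th _ => lt th).
apply/negP; rewrite -leNgt.
have post : forall (S : {ffun cell N T -> bool}) (a : R),
   V <= \sum_(th : {ffun cell N T -> bool}) pi th S *
          (a - n^-1 * \sum_(c : cell N T) (q (th c) true - q (th c) false)) ^+ 2.
  move=> S a.
  have := @var_lb _ (fun c b => q b (S c)) (fun c => q_sum_b (S c)) (fun c b => n^-1 * (q b true - q b false)) a.
  rewrite /wt /=.
  have -> : \sum_(c : cell N T) q true (S c) * q false (S c) *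
      (n^-1 * (q true true - q true false) - n^-1 * (q false true - q false false)) ^+ 2 = V.
    have nn0 : n != 0 by rewrite gt_eqF.
    rewrite (eq_bigr (fun _ => 3/16 * n^-1 ^+ 2)) => [|c _]; last first.
      by rewrite /q; case: (S c) => /=; field.
    rewrite sumr_const card_prod !card_ord -[X in X = _]mulr_natr natrM -/n /V.
    rewrite -/n expr2 -!mulrA mulVf ?mulr1 // gt_eqF //.
  move=> h; apply: (le_trans h); rewrite le_eqVlt; apply/orP; left; apply/eqP; apply: eq_bigr => th _.
  by rewrite mulr_sumr.
rewrite /MSE.
under [X in _ <= X]eq_bigr => th _ do rewrite expectE gateE.
rewrite [X in _ <= X]exchange_big /=.
under [X in _ <= X]eq_bigr => W _ do rewrite exchange_big /=.
have Dge0 W S : 0 <= Dd d W S.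
  by apply: prodr_ge0 => t _; exact: (proj1 (proj1 vd t W (Yo W S)) _).
have DS S : \sum_(W : tmat N T) Dd d W S = 1.
  apply: (@design_sum N T d (fun W => Yo W S) vd) => W W' c e.
  by rewrite /Yo e.
apply: (@le_trans _ _ (\sum_(W : tmat N T) \sum_(S : {ffun cell N T -> bool}) Dd d W S * V)).
  rewrite exchange_big /=; apply: ler_sum => S _.
  by rewrite -mulr_suml DS mul1r.
apply: ler_sum => W _; apply: ler_sum => S _.
under eq_bigr => th _ do rewrite -mulrA.
rewrite -mulr_sumr; apply: ler_wpM2l => //.
Qed.
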